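(* Let $\{\mathbf{G}_k\}_{k\ge1}$ be (any realization of) the observed chain of the Sampled Moran Genealogy Process with population size $n$, sample times $t_1<t_2<\cdots$ and attachment times $\{a_k\}_{k\ge2}$, and define $m(j,k)$ as below. Then for every $k\ge2$, \[ \sum_{j=1}^{k-1}\ \sum_{e\in\mathrm{live}(\mathbf{G}_j)}\log\frac{n-\ell_j(e)}{n-\ell_j(e)-1}\,\mathbf 1\{e>a_{j+1}\}=\sum_{j=1}^{k-1}\log\frac{n}{n-m(j,k)}. \]
   Context: In the Sampled Moran Genealogy Process, a population of constant size $n$ evolves under Moran dynamics (at rate-$\mu$ events an ordered pair of distinct individuals is chosen uniformly, the first dies and the second gives birth), and at each deterministic time $t_i$ ($t_1<t_2<\cdots$) one living individual is sampled. The observed genealogy $\mathbf{G}_k$ is the genealogy formed by the ancestral lineages of samples $1,\dots,k$ (sample $i$'s lineage traced back from $t_i$). For $j\ge2$ the attachment time $a_j\le t_{j-1}$ is the most recent time $s$ at which the ancestor at time $s$ of sample $j$ coincides with the ancestor-or-self at time $s$ of some sample $i<j$ with $t_i\ge s$; $a_j$ is either a sample time (direct descent) or not a sample time (a branch point). Sample $i\le k$ is dead in $\mathbf{G}_k$ if $a_j=t_i$ for some $i<j\le k$, live otherwise; $\mathrm{live}(\mathbf{G}_k)$ is the set of sample times of live samples. Branch points of $\mathbf{G}_k$: the $a_j$, $2\le j\le k$, that are not sample times. $\ell_k(t)=|\{e\in\mathrm{live}(\mathbf{G}_k):e>t\}|-|\{\text{branch points }b\text{ of }\mathbf{G}_k:b>t\}|$.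 For $j\le k$, $m(j,k)=|\{i: j<i\le k,\ a_i<t_j,\ \text{and } a_r\ne t_j \text{ for all } r<i\}|$, the number of samples attaching to the left of $t_j$ before sample $j$ dies (or before $k$ is reached). *)

(* Defs.v *)
From HB Require Import structures.
From mathcomp Require Import all_boot all_order all_algebra.
From mathcomp Require Import all_classical all_reals all_analysis.
Set Implicit Arguments. Unset Strict Implicit. Unset Printing Implicit Defensive.
Import Order.TTheory GRing.Theory Num.Theory.
Local Open Scope ring_scope.

(* Birth-death events are indexed by [q : int]
   (bi-infinite, stationary process), at strictly increasing times [tau q];
   at event [q] the individual in slot [d q] dies and the individual in slot
   [b q] gives birth, the offspring occupying slot [d q].
   Convention: the state at time s is the state just BEFORE the events at
   time s (left-continuous), so at a birth time the offspring's lineage is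
   already that of its parent. *)

Definition moran_realization (R : realType) (n : nat)
    (tau : int -> R) (d b : int -> 'I_n) : Prop :=
  [/\ (forall q1 q2 : int, q1 < q2 -> tau q1 < tau q2),
      (forall q, d q != b q),
      (forall M : R, exists q, M < tau q) &
      (forall M : R, exists q, tau q < M)].

(* going backwards across event q, a lineage sitting in slot d q moves to b q *)
Definition jump (n : nat) (d b : int -> 'I_n) (q : int) (y : 'I_n) : 'I_n :=
  if y == d q then b q else y.

(* [anc tau d b x t y s]: the ancestor at time s (s <= t) of the individual
   occupying slot x at time t occupies slot y at time s. *)
Inductive anc (R : realType) (n : nat) (tau : int -> R) (d b : int -> 'I_n)
    (x : 'I_n) (t : R) : 'I_n -> R -> Prop :=
| anc_base : anc tau d b x t x t
| anc_flat (y : 'I_n) (s' s : R) :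
    anc tau d b x t y s' -> s <= s' ->
    (forall q, ~ (s <= tau q /\ tau q < s')) -> anc tau d b x t y s
| anc_jump (y : 'I_n) (s' : R) (q : int) :
    anc tau d b x t y s' -> tau q < s' ->
    (forall q', ~ (tau q < tau q' /\ tau q' < s')) ->
    anc tau d b x t (jump d b q y) (tau q).

(* ---------- sampling and attachment times ----------
   Samples are indexed by i >= 1: sample i is taken at time [t i] and is the
   individual in slot [sig i] at that time. *)

Definition coincide_at (R : realType) (n : nat) (tau : int -> R)
    (d b : int -> 'I_n) (t : nat -> R) (sig : nat -> 'I_n) (j : nat) (s : R)
    : Prop :=
  exists i, [/\ (1 <= i < j)%N, s <= t i &
    exists y, anc tau d b (sig j) (t j) y s /\ anc tau d b (sig i) (t i) y s].

Definition is_attachment (R : realType) (n : nat) (tau : int -> R)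
    (d b : int -> 'I_n) (t : nat -> R) (sig : nat -> 'I_n) (j : nat) (aj : R)
    : Prop :=
  coincide_at tau d b t sig j aj /\
  (forall s, coincide_at tau d b t sig j s -> s <= aj).

Definition is_sample_time (R : realType) (t : nat -> R) (x : R) : bool :=
  `[< exists i, (1 <= i)%N /\ t i = x >].

Definition dead (R : realType) (t a : nat -> R) (k i : nat) : bool :=
  has (fun r => a r == t i) (iota i.+1 (k - i)).

Definition live_times (R : realType) (t a : nat -> R) (k : nat) : seq R :=
  [seq t i | i <- iota 1 k & ~~ dead t a k i].

Definition branch_points (R : realType) (t a : nat -> R) (k : nat) : seq R :=
  undup [seq a j | j <- iota 2 k.-1 & ~~ is_sample_time t (a j)].

Definition ell (R : realType) (t a : nat -> R) (k : nat) (x : R) : R :=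
  (size [seq e <- live_times t a k | x < e])%:R
  - (size [seq c <- branch_points t a k | x < c])%:R.

Definition mjk (R : realType) (t a : nat -> R) (j k : nat) : nat :=
  count (fun i => (a i < t j) && all (fun r => a r != t j) (iota 2 (i - 2)))
        (iota j.+1 (k - j)).

(* Main.v *)
Require Import Defs.
From HB Require Import structures.
From mathcomp Require Import all_boot all_order all_algebra.
From mathcomp Require Import all_classical all_reals all_analysis.
From mathcomp Require Import zify ring lra.
Import Order.TTheory GRing.Theory Num.Theory.
Local Open Scope ring_scope.
Set Implicit Arguments. Unset Strict Implicit.

Section Anc.
Variables (R : realType) (n : nat) (tau : int -> R) (d b : int -> 'I_n).
Variables (x : 'I_n) (t : R).
Hypothesis tau_mono : forall q1 q2 : int, q1 < q2 -> tau q1 < tau q2.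

Lemma tau_inj q1 q2 : tau q1 = tau q2 -> q1 = q2.
Proof.
move=> E; case: (ltgtP q1 q2) => // H.
- by have := tau_mono H; rewrite E ltxx.
- by have := tau_mono H; rewrite E ltxx.
Qed.

Lemma anc_le y s : anc tau d b x t y s -> s <= t.
Proof.
elim=> [|y0 s' s0 _ IH h _|y0 s' q _ IH h _]; first by [].
- exact: le_trans h IH.
- exact: le_trans (ltW h) IH.
Qed.

Lemma anc_top y s : anc tau d b x t y s -> s = t -> y = x.
Proof.
elim=> [//|y0 s' s0 D IH h _ E|y0 s' q D IH h _ E].
- apply: IH; have := anc_le D; rewrite -E => h2; apply/eqP; rewrite eq_le h2 h //.
- have := anc_le D; rewrite -E => h2. by have := lt_le_trans h h2; rewrite ltxx.
Qed.

Lemma anc_trunc y s : anc tau d b x t y s ->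
  forall u, s <= u -> u <= t -> exists z, anc tau d b x t z u.
Proof.
elim=> [|y0 s' s0 D IH h nev|y0 s' q D IH h nev] u h1 h2.
- have -> : u = t by apply/eqP; rewrite eq_le h1 h2.
  by exists x; constructor.
- case: (leP s' u) => hu; first exact: IH.
  exists y0; apply: (anc_flat D (ltW hu)) => q [q1 q2].
  by apply: (nev q); split => //; apply: le_trans h1 q1.
- case: (leP s' u) => hu; first exact: IH.
  move: h1; rewrite le_eqVlt => /orP[/eqP <-|h1].
    by exists (jump d b q y0); apply: anc_jump D h nev.
  exists y0; apply: (anc_flat D (ltW hu)) => q' [q1 q2].
  by apply: (nev q'); split => //; apply: lt_le_trans h1 q1.
Qed.

Lemma anc_C y sA : anc tau d b x t y sA ->
  forall z s2, anc tau d b x t z s2 -> sA <= s2 ->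
  (forall q, ~ (sA <= tau q /\ tau q < s2)) -> y = z.
Proof.
elim=> [|y0 s1' s1 D1 IH1 h1 nev1|y0 s1' q D1 IH1 h1 nev1].
- move=> z s2 D2 h nev; apply/esym/(anc_top D2).
  by apply/eqP; rewrite eq_le h (anc_le D2).
- move=> z sB D2; elim: D2.
  + move=> h nev; apply: (IH1 _ _ (anc_base _ _ _ _ _)); first exact: anc_le D1.
    by move=> q [q1 q2]; apply: (nev q); split=> //; apply: le_trans h1 q1.
  + move=> z0 s2' s2 D2 IH2 h2 nev2 h nev.
    case: (leP s1' s2) => hs.
      apply: IH1 (anc_flat D2 h2 nev2) hs _.
      by move=> q [q1 q2]; apply: (nev q); split=> //; apply: le_trans h1 q1.
    apply: IH2; first exact: le_trans h h2.
    move=> q [q1 q2]; case: (ltP (tau q) s2) => hq.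
      by apply: (nev q).
    by apply: (nev2 q).
  + move=> z0 s2' q D2 IH2 h2 nev2 h nev.
    case: (leP s1' (tau q)) => hs.
      apply: IH1 (anc_jump D2 h2 nev2) hs _.
      by move=> q' [q1 q2]; apply: (nev q'); split=> //; apply: le_trans h1 q1.
    by exfalso; apply: (nev1 q).
-
  have HY : forall z' s2', anc tau d b x t z' s2' -> s2' <= s1' ->
      (forall q0, ~ (s2' <= tau q0 /\ tau q0 < s1')) -> y0 = z'.
    move=> z' s2'; elim.
    + move=> h nev; apply: (IH1 _ _ (anc_base _ _ _ _ _)); first exact: anc_le D1.
      by move=> q0 [q1 q2]; have := le_lt_trans (le_trans h q1) q2; rewrite ltxx.
    + move=> z0 s3 s4 D3 IH3 h3 nev3 h nev.
      case: (leP s3 s1') => hs.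
        apply: IH3 => // q0 [q1 q2]; apply: (nev q0); split=> //.
        exact: le_trans h3 q1.
      apply: IH1 D3 (ltW hs) _ => q0 [q1 q2].
      by apply: (nev3 q0); split=> //; apply: le_trans h q1.
    + move=> z0 s3 q3 D3 IH3 h3 nev3 h nev.
      have E : tau q3 = s1'.
        apply/eqP; rewrite eq_le h /=; rewrite leNgt; apply/negP => hq.
        by apply: (nev q3).
      by apply: IH1 (anc_jump D3 h3 nev3) _ _; rewrite ?E // => q0 [q1 q2]; have := le_lt_trans q1 q2; rewrite ltxx.
  move=> z s2 D2 h nev.
  have E2 : s2 = tau q.
    apply/eqP; rewrite eq_le h andbT leNgt; apply/negP => hq.
    by apply: (nev q); split.
  subst s2.
  suff key : forall z' s2', anc tau d b x t z' s2' -> s2' = tau q -> jump d b q y0 = z'.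
    exact: key D2 erefl.
  move=> {D2 h nev} z' s2'; elim.
  + move=> E; have := anc_le D1; rewrite E => h3.
    by have := lt_le_trans h1 h3; rewrite ltxx.
  + move=> z0 s2'' s3 D2 IH2 h2 nev2 E.
    have E3 : s2'' = s3.
      apply/eqP; rewrite eq_le h2 andbT leNgt; apply/negP => hq.
      by apply: (nev2 q); rewrite -E; split.
    subst s2''. by apply: IH2.
  + move=> z0 s2'' q2 D2 IH2 h2 nev2 E.
    have Eq := tau_inj E; subst q2.
    congr (jump d b q _).
    case: (leP s1' s2'') => hs.
      apply: IH1 D2 hs _ => q0 [q1 q2].
      by apply: (nev2 q0); split=> //; apply: lt_le_trans h1 q1.
    apply: HY D2 (ltW hs) _ => q0 [q1 q2].
    by apply: (nev1 q0); split=> //; apply: lt_le_trans h2 q1.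
Qed.

Lemma anc_uniq y z s : anc tau d b x t y s -> anc tau d b x t z s -> y = z.
Proof. move=> D1 D2; apply: anc_C D1 _ _ D2 (lexx _) _ => q [q1 q2]. by have := le_lt_trans q1 q2; rewrite ltxx. Qed.

End Anc.

Lemma jump_eq (n : nat) (d b : int -> 'I_n) q x1 x2 :
  jump d b q x1 = jump d b q x2 -> x1 != x2 ->
  (x1 = d q /\ x2 = b q) \/ (x1 = b q /\ x2 = d q).
Proof.
rewrite /jump; case: eqP => [->|h1]; case: eqP => [->|h2] //.
- by move=> _; rewrite eqxx.
- by move=> E _; left.
- by move=> E _; right.
- by move=> -> ; rewrite eqxx.
Qed.

Lemma below_all (R : realType) (s : R) (l : seq R) :
  all (fun z => s < z) l -> exists u, s < u /\ all (fun z => u < z) l.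
Proof.
elim: l => [|z l IH] /=.
  by move=> _; exists (s + 1); split => //; lra.
move=> /andP[hz /IH [u0 [su0 hl]]].
exists ((s + Num.min u0 z) / 2); split.
  by case: (leP u0 z) => h; lra.
apply/andP; split.
  by case: (leP u0 z) => h; lra.
apply/allP => w /(allP hl) hw.
by case: (leP u0 z) => h; lra.
Qed.

Section Moran.
Variables (R : realType) (n : nat) (tau : int -> R) (d b : int -> 'I_n).
Variables (t : nat -> R) (sig : nat -> 'I_n) (a : nat -> R).
Hypothesis Hreal : moran_realization tau d b.
Hypothesis Ht : forall i, (1 <= i)%N -> t i < t i.+1.
Hypothesis Htt : forall (i : nat) (q : int), (1 <= i)%N -> tau q != t i.
Hypothesis Hatt : forall j, (2 <= j)%N -> is_attachment tau d b t sig j (a j).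

Let tau_mono : forall q1 q2 : int, q1 < q2 -> tau q1 < tau q2.
Proof. by case: Hreal. Qed.

Lemma t_mono i j : (1 <= i)%N -> (i < j)%N -> t i < t j.
Proof.
move=> hi; elim: j => // j IH; rewrite ltnS leq_eqVlt => /orP[/eqP<-|h].
  exact: Ht.
apply: (lt_trans (IH h)); apply: Ht; lia.
Qed.

Lemma t_le i j : (1 <= i)%N -> (i <= j)%N -> t i <= t j.
Proof. move=> hi; rewrite leq_eqVlt => /orP[/eqP->//|h]; exact/ltW/t_mono. Qed.

Lemma t_inj i j : (1 <= i)%N -> (1 <= j)%N -> t i = t j -> i = j.
Proof.
move=> hi hj E; case: (ltngtP i j) => // h.
- by have := t_mono hi h; rewrite E ltxx.
- by have := t_mono hj h; rewrite E ltxx.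
Qed.

Lemma a_le r : (2 <= r)%N -> a r <= t r.-1.
Proof.
move=> hr; have [[i [/andP[h1 h2] hs _]] _] := Hatt hr.
apply: le_trans hs (t_le h1 _); lia.
Qed.

Lemma tau_le q1 q2 : q1 <= q2 -> tau q1 <= tau q2.
Proof. by rewrite le_eqVlt => /orP[/eqP->//|h]; exact/ltW/tau_mono. Qed.

Lemma gap s : exists e, s < e /\ forall q, s < tau q -> e <= tau q.
Proof.
have [_ _ H3 H4] := Hreal.
have [q1 hq1] := H3 s; have [q0 hq0] := H4 s.
have key : forall (N : nat) q, tau q <= s -> s < tau (q + N%:Z) ->
    exists e, s < e /\ forall q', s < tau q' -> e <= tau q'.
  elim=> [|N IH] q hq hN.
    by move: hN; rewrite addr0 => hN; have := le_lt_trans hq hN; rewrite ltxx.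
  case: (ltP s (tau (q + 1))) => h.
    exists (tau (q + 1)); split => // q' hq'.
    apply: tau_le; case: (leP q' q) => hh; last by lia.
    by have := le_trans (tau_le hh) hq; rewrite leNgt hq'.
  apply: IH h _; have -> : q + 1 + N%:Z = q + N.+1%:Z by lia.
  exact: hN.
have hq01 : q0 < q1.
  case: (ltP q0 q1) => // h; have := tau_le h.
  by rewrite leNgt (lt_trans hq0 hq1).
apply: (key `|q1 - q0|%N q0 (ltW hq0)).
have -> : q0 + (`|q1 - q0|%N)%:Z = q1 by lia.
exact: hq1.
Qed.

Lemma up x T y s u : anc tau d b x T y s -> s < u -> u <= T ->
  (forall q, s < tau q -> u < tau q) ->
  exists v, [/\ anc tau d b x T v u,
     ((forall q, tau q != s) -> y = v) &
     (forall q, tau q = s -> y = jump d b q v)].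
Proof.
move=> D su uT hev.
have [v Dv] := anc_trunc D (ltW su) uT.
exists v; split => //.
- move=> nev; apply: (anc_uniq tau_mono D).
  apply: (anc_flat Dv (ltW su)) => q [q1 q2].
  move: q1; rewrite le_eqVlt => /orP[/eqP E|h].
    by have := nev q; rewrite E eqxx.
  by have := hev q h; rewrite ltNge (ltW q2).
- move=> q E; apply: (anc_uniq tau_mono D); rewrite -E.
  apply: (anc_jump Dv); first by rewrite E.
  move=> q' [q1 q2]; rewrite E in q1.
  by have := hev q' q1; rewrite ltNge (ltW q2).
Qed.

Lemma no_coin j u : (2 <= j)%N -> a j < u -> forall i y, (1 <= i < j)%N -> u <= t i ->
  anc tau d b (sig j) (t j) y u -> anc tau d b (sig i) (t i) y u -> False.
Proof.
move=> hj hu i y hi hti D1 D2.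
have [_ Hmax] := Hatt hj.
have := Hmax u; rewrite leNgt hu => /(_ _)/negP; apply.
exists i; split => //; exists y; split => //.
done.
Qed.


Lemma a_inj_lt i1 i2 : (2 <= i1)%N -> (i1 < i2)%N -> a i1 = a i2 -> False.
Proof.
move=> h1 h12 E.
have h2 : (2 <= i2)%N by lia.
set s := a i1.
have [[i' [/andP[hi'1 hi'2] hs' [Y [DY1 DY']]]] _] := Hatt h1.
have [[i [/andP[hi1 hi2] hs [W [DW2 DW]]]] _] := Hatt h2.
rewrite -E -/s in hs DW2 DW.
have st1 : s < t i1 by apply: le_lt_trans hs' (t_mono hi'1 hi'2).
have st2 : s < t i2 by apply: le_lt_trans hs (t_mono hi1 hi2).
have [e [se He]] := gap s.
have hall : all (fun z => s < z) ([:: e; t i1; t i2] ++ [seq z <- [:: t i; t i'] | s < z]).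
  rewrite all_cat /= se st1 st2 /=.
  by case: ifP => /= h; case: ifP => /= h'; rewrite ?h ?h'.
have [u [su /allP hu]] := below_all hall.
have ue : u < e by apply: hu; rewrite !inE eqxx.
have ut1 : u <= t i1 by apply/ltW/hu; rewrite !inE eqxx orbT.
have ut2 : u <= t i2 by apply/ltW/hu; rewrite !inE eqxx !orbT.
have uti : s < t i -> u <= t i.
  by move=> h; apply/ltW/hu; rewrite mem_cat mem_filter h !inE eqxx !orbT.
have uti' : s < t i' -> u <= t i'.
  by move=> h; apply/ltW/hu; rewrite mem_cat mem_filter h !inE eqxx !orbT.
have hev : forall q, s < tau q -> u < tau q.
  by move=> q /He; apply: lt_le_trans ue.
have nc1 := no_coin h1.
have nc2 := no_coin h2.
rewrite -/s in nc1; rewrite -E -/s in nc2.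
have [[q Eq]|nE] := pselect (exists q, tau q = s).
- have ti : s < t i.
    rewrite lt_neqAle hs andbT; apply/eqP => E'; have := Htt q hi1.
    by rewrite Eq E' eqxx.
  have ti' : s < t i'.
    rewrite lt_neqAle hs' andbT; apply/eqP => E'; have := Htt q hi'1.
    by rewrite Eq E' eqxx.
  have [v1 [Dv1 _ J1]] := up DY1 su ut1 hev.
  have [v' [Dv' _ J']] := up DY' su (uti' ti') hev.
  have [v2 [Dv2 _ J2]] := up DW2 su ut2 hev.
  have [v [Dv _ J]] := up DW su (uti ti) hev.
  have n1 : v1 != v'.
    apply/eqP => E1; subst v'.
    apply: (nc1 u su i' v1 _ (uti' ti') Dv1 Dv'); apply/andP; split => //.
  have n2 : v2 != v.
    apply/eqP => E1; subst v.
    apply: (nc2 u su i v2 _ (uti ti) Dv2 Dv); apply/andP; split => //.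
  have e1 : jump d b q v1 = jump d b q v' by rewrite -J1 // -J'.
  have e2 : jump d b q v2 = jump d b q v by rewrite -J2 // -J.
  have : v2 = v1 \/ v2 = v'.
    by case: (jump_eq e1 n1) => [[-> ->]|[-> ->]]; case: (jump_eq e2 n2) => [[-> _]|[-> _]]; tauto.
  case=> E2.
  + subst v2; apply: (nc2 u su i1 v1 _ ut1 Dv2 Dv1); rewrite h12 andbT; exact: ltnW.
  + subst v2; apply: (nc2 u su i' v' _ (uti' ti') Dv2 Dv'); rewrite hi'1 /=; exact: ltn_trans hi'2 h12.
- have nev : forall q, tau q != s by move=> q; apply/eqP => Eq; apply: nE; exists q.
  have [v1 [Dv1 Y1 _]] := up DY1 su ut1 hev.
  have [v2 [Dv2 W2 _]] := up DW2 su ut2 hev.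
  have ti' : t i' = s.
    apply/eqP; rewrite eq_le hs' andbT leNgt; apply/negP => ti'.
    have [v' [Dv' Y' _]] := up DY' su (uti' ti') hev.
    have E1 : v' = v1 by rewrite -(Y1 nev) (Y' nev).
    subst v'; apply: (nc1 u su i' v1 _ (uti' ti') Dv1 Dv'); apply/andP; split => //.
  have ti : t i = s.
    apply/eqP; rewrite eq_le hs andbT leNgt; apply/negP => ti.
    have [v [Dv W' _]] := up DW su (uti ti) hev.
    have E1 : v = v2 by rewrite -(W2 nev) (W' nev).
    subst v; apply: (nc2 u su i v2 _ (uti ti) Dv2 Dv); apply/andP; split => //.
  have ii : i = i' by apply: t_inj => //; rewrite ti ti'.
  subst i.
  have EY : Y = sig i' by apply: (anc_top DY'); rewrite ti'.
  have EW : W = sig i' by apply: (anc_top DW); rewrite ti'.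
  have E1 : v2 = v1 by rewrite -(Y1 nev) EY -EW (W2 nev).
  subst v2; apply: (nc2 u su i1 v1 _ ut1 Dv2 Dv1); rewrite h12 andbT; exact: ltnW.
Qed.

Lemma a_inj i1 i2 : (2 <= i1)%N -> (2 <= i2)%N -> a i1 = a i2 -> i1 = i2.
Proof.
move=> h1 h2 E; case: (ltngtP i1 i2) => // h.
- by case: (a_inj_lt h1 h E).
- by case: (a_inj_lt h2 h (esym E)).
Qed.


Lemma m_bound j K : (1 <= j)%N -> (mjk t a j K < n)%N.
Proof.
move=> hj.
set cl := [seq i <- iota j.+1 (K - j) | (a i < t j) && all (fun r => a r != t j) (iota 2 (i - 2))].
have Em : mjk t a j K = size cl by rewrite /mjk size_filter.
have ex : forall i, exists y : 'I_n, i \in cl -> anc tau d b (sig i) (t i) y (t j).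
  move=> i; case: (boolP (i \in cl)) => hi; last by exists (sig j).
  move: (hi); rewrite mem_filter mem_iota => /andP[/andP[ha _] /andP[hi1 hi2]].
  have hi2' : (2 <= i)%N by apply: leq_trans hi1; rewrite ltnS.
  have [[i0 [_ _ [y [Dy _]]]] _] := Hatt hi2'.
  have [z Dz] := anc_trunc Dy (ltW ha) (t_le hj (ltnW hi1)).
  by exists z.
have [f Hf] := choice ex.
have memcl : forall i, i \in cl -> [/\ (2 <= i)%N, (j < i)%N & a i < t j].
  move=> i; rewrite mem_filter mem_iota => /andP[/andP[ha _] /andP[hi1 hi2]].
  by split => //; apply: leq_trans hi1; rewrite ltnS.
have inj : {in cl &, injective f}.
  move=> i1 i2 h1 h2 E.
  have [h12 hj1 ha1] := memcl _ h1; have [h22 hj2 ha2] := memcl _ h2.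
  case: (ltngtP i1 i2) => // lt; exfalso.
  - apply: (no_coin h22 ha2 (i := i1) (y := f i1) _ (t_le hj (ltnW hj1))).
    + by rewrite lt andbT; apply: leq_trans hj1.
    + by rewrite E; apply: Hf.
    + exact: Hf.
  - apply: (no_coin h12 ha1 (i := i2) (y := f i2) _ (t_le hj (ltnW hj2))).
    + by rewrite lt andbT; apply: leq_trans hj2.
    + by rewrite -E; apply: Hf.
    + exact: Hf.
have nsig : forall i, i \in cl -> f i != sig j.
  move=> i hi; apply/negP => /eqP E.
  have [h2 hji ha] := memcl _ hi.
  apply: (no_coin h2 ha (i := j) (y := sig j) _ (lexx _)).
  + by rewrite hj hji.
  + by rewrite -E; apply: Hf.
  + exact: anc_base.
have U : uniq (map f cl) by rewrite (map_inj_in_uniq inj) filter_uniq // iota_uniq.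
have n0 : (0 < n)%N by case: (sig j) => m hm; apply: leq_ltn_trans hm.
rewrite Em -(size_map f) -(card_uniqP U).
apply: (@leq_ltn_trans #|predC1 (sig j)|).
  apply: subset_leq_card; apply/fintype.subsetP => y /mapP [i hi ->].
  by rewrite !inE nsig.
by rewrite cardC1 card_ord prednK.
Qed.

End Moran.

Lemma count_split (T : Type) (P Q : pred T) (s : seq T) :
  count P s = (count (fun x => P x && Q x) s + count (fun x => P x && ~~ Q x) s)%N.
Proof.
elim: s => //= x s ->; case: (P x); case: (Q x) => /=; lia.
Qed.

Lemma iota_rcons m k : iota m k.+1 = iota m k ++ [:: (m + k)%N].
Proof. by rewrite -addn1 iotaD. Qed.

Section Comb.
Variables (R : realType) (n : nat) (t a : nat -> R).
Hypothesis Ht : forall i, (1 <= i)%N -> t i < t i.+1.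
Hypothesis Ha : forall r, (2 <= r)%N -> a r <= t r.-1.
Hypothesis Hinj : forall i1 i2, (2 <= i1)%N -> (2 <= i2)%N -> a i1 = a i2 -> i1 = i2.
Hypothesis Hm : forall j K, (1 <= j)%N -> (mjk t a j K < n)%N.

Lemma tm i j : (1 <= i)%N -> (i < j)%N -> t i < t j.
Proof.
move=> hi; elim: j => // j IH; rewrite ltnS leq_eqVlt => /orP[/eqP<-|h].
  exact: Ht.
apply: (lt_trans (IH h)); apply: Ht; exact: leq_trans hi (ltnW h).
Qed.

Lemma tl i j : (1 <= i)%N -> (i <= j)%N -> t i <= t j.
Proof. move=> hi; rewrite leq_eqVlt => /orP[/eqP->//|h]; exact/ltW/tm. Qed.

Lemma tinj i j : (1 <= i)%N -> (1 <= j)%N -> t i = t j -> i = j.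
Proof.
move=> hi hj E; case: (ltngtP i j) => // h.
- by have := tm hi h; rewrite E ltxx.
- by have := tm hj h; rewrite E ltxx.
Qed.

Lemma alt r j : (2 <= r)%N -> (r <= j)%N -> a r < t j.
Proof.
move=> hr hrj; apply: (le_lt_trans (Ha hr)); apply: tm.
  by rewrite -ltnS prednK // ltnW.
by rewrite prednK ?(leq_trans _ hr) // .
Qed.

Lemma dead_step K r : (r <= K)%N -> dead t a K.+1 r = dead t a K r || (a K.+1 == t r).
Proof.
move=> hr; rewrite /dead subSn // -[(K - r).+1]addn1 iotaD has_cat /= orbF.
by have -> : (r.+1 + (K - r) = K.+1)%N by lia.
Qed.

Lemma dead_self K : dead t a K K = false.
Proof. by rewrite /dead subnn. Qed.

Definition LT K x := count (fun r => ~~ dead t a K r && (x < t r)) (iota 1 K).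
Definition BP K x := count (fun r => ~~ is_sample_time t (a r) && (x < a r)) (iota 2 K.-1).

Lemma ellE K x : ell t a K x = (LT K x)%:R - (BP K x)%:R.
Proof.
rewrite /ell /live_times /branch_points /LT /BP.
rewrite undup_id; last first.
  rewrite (map_inj_in_uniq (f := a)) ?filter_uniq ?iota_uniq //.
  move=> i1 i2; rewrite !mem_filter !mem_iota => /andP[_ /andP[h1 _]] /andP[_ /andP[h2 _]].
  exact: Hinj.
rewrite !size_filter !count_map !count_filter.
by congr (_%:R - _%:R); apply: eq_count => r /=; rewrite andbC.
Qed.

Lemma mjk_step j K : (j <= K)%N ->
  mjk t a j K.+1 = (mjk t a j K + ((a K.+1 < t j)%R && all (fun r => a r != t j) (iota 2 (K.+1 - 2))))%N.
Proof.
move=> hj; rewrite /mjk subSn // -[(K - j).+1]addn1 iotaD count_cat /= addn0.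
by have -> : (j.+1 + (K - j) = K.+1)%N by lia.
Qed.

Lemma live_all j K : (1 <= j)%N -> ~~ dead t a K j ->
  all (fun r => a r != t j) (iota 2 K.-1).
Proof.
move=> hj hd; apply/allP => r; rewrite mem_iota => /andP[h2 h3].
case: (leqP r j) => hrj.
  by rewrite lt_eqF // alt.
move: hd; rewrite /dead => /hasPn; apply; rewrite mem_iota hrj /=.
move: h3; case: K => [|K] //=; lia.
Qed.

Lemma ell_live j K : (1 <= j)%N -> (j <= K)%N -> ~~ dead t a K j ->
  LT K (t j) = (BP K (t j) + mjk t a j K)%N.
Proof.
move=> hj; elim: K => [|K IH]; first by rewrite leqn0 => /eqP E; rewrite E in hj.
rewrite leq_eqVlt => /orP[/eqP E|hjK].
  subst j => _.
  have -> : LT K.+1 (t K.+1) = 0%N.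
    apply/eqP; rewrite -leqn0 leqNgt -has_count; apply/hasPn => r.
    rewrite mem_iota => /andP[h1 h2].
    have h3 : (r <= K.+1)%N by rewrite add1n ltnS in h2.
    by rewrite negb_and -leNgt (tl h1 h3) orbT.
  have -> : BP K.+1 (t K.+1) = 0%N.
    apply/eqP; rewrite -leqn0 leqNgt -has_count; apply/hasPn => r.
    rewrite mem_iota => /andP[h1 h2].
    have h3 : (r <= K.+1)%N by move: h2 => /=; lia.
    by rewrite negb_and -leNgt (ltW (alt h1 h3)) orbT.
  by rewrite /mjk subnn.
rewrite ltnS in hjK.
move=> hd; move: (hd); rewrite dead_step // negb_or => /andP[hdK haj].
have {}IH := IH hjK hdK.
have hK : (1 <= K)%N by apply: leq_trans hj hjK.
have ELT : LT K.+1 (t j) =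
   (count (fun r => ~~ dead t a K r && (a K.+1 != t r) && (t j < t r)%R) (iota 1 K) + 1)%N.
  rewrite /LT iota_rcons add1n.
  rewrite count_cat /= dead_self /= tm //.
  rewrite addn0; congr (_ + _)%N; apply: eq_in_count => r.
  rewrite mem_iota => /andP[_ h]; rewrite add1n ltnS in h.
  by rewrite dead_step // negb_or.
have EBP : BP K.+1 (t j) = (BP K (t j) + (~~ is_sample_time t (a K.+1) && (t j < a K.+1)%R))%N.
  rewrite /BP; move: hK; case: K {IH ELT hdK haj hd hjK} => [//|K] _.
  by rewrite [K.+2.-1]/= [K.+1.-1]/= iota_rcons count_cat /= addn0.
have Em : mjk t a j K.+1 = (mjk t a j K + (a K.+1 < t j)%R)%N.
  rewrite mjk_step // (_ : K.+1 - 2 = K.-1)%N; last by lia.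
  by rewrite live_all // andbT.
rewrite ELT EBP Em.
case: (ltgtP (a K.+1) (t j)) => hc.
- rewrite andbF addn0 addnA -IH /LT; congr (_ + _)%N; apply: eq_count => r /=.
  case: (ltP (t j) (t r)) => h; rewrite ?andbF ?andbT //.
  by rewrite (lt_eqF (lt_trans hc h)) andbT.
- rewrite addn0 andbT /is_sample_time.
  case: asboolP => [[r0 [hr0 Er0]]|nist] /=.
  + rewrite addn0 -IH /LT.
    have hr0K : (r0 <= K)%N.
      rewrite leqNgt; apply/negP => h.
      have := tm hK h; rewrite Er0 ltNge.
      by have := Ha (hK : (2 <= K.+1)%N); rewrite /= => ->.
    have hr0d : ~~ dead t a K r0.
      apply/hasPn => r; rewrite mem_iota => /andP[h1 h2]; apply/negP => /eqP E.
      have r2 : (2 <= r)%N by apply: leq_ltn_trans hr0 h1.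
      have Er := Hinj r2 (hK : (2 <= K.+1)%N) (etrans E Er0).
      by rewrite Er addSn subnKC // ltnn in h2.
    rewrite [RHS](count_split _ (pred1 r0)) addnC; congr (_ + _)%N.
    * rewrite (@eq_in_count _ _ (pred1 r0)); last first.
        move=> r _ /=; case: eqP => [->|]; rewrite ?andbF // hr0d /= andbT Er0 hc //.
      have := count_uniq_mem r0 (iota_uniq 1 K); rewrite mem_iota hr0 /= add1n ltnS hr0K.
      by move=> H; exact: (esym H).
    * apply: eq_in_count => r; rewrite mem_iota => /andP[hr1 _] /=.
      rewrite -Er0 -andbA [(t r0 != t r) && _]andbC andbA; congr (_ && _).
      apply/idP/idP => /eqP h; apply/eqP => h'; apply: h.
        by rewrite h'.
      exact: tinj hr1 hr0 (esym h').
  + rewrite -addnA (addnC 1%N) addnA -IH /LT; congr (_ + _)%N.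
    apply: eq_in_count => r; rewrite mem_iota => /andP[hr1 _] /=.
    case: (boolP (a K.+1 == t r)) => /= [/eqP E|_]; last by rewrite andbT.
    by exfalso; apply: nist; exists r.
- by move: haj; rewrite hc eqxx.
Qed.


Definition Fl K x := ln ((n%:R - ell t a K x) / (n%:R - ell t a K x - 1)) : R.
Definition G j r := if (r <= j)%N && ~~ dead t a j r && (a j.+1 < t r) then Fl j (t r) else 0.

Lemma ellm j K : (1 <= j)%N -> (j <= K)%N -> ~~ dead t a K j ->
  ell t a K (t j) = (mjk t a j K)%:R.
Proof. by move=> h1 h2 h3; rewrite ellE ell_live // natrD addrAC subrr add0r. Qed.

Lemma S_r r K : (1 <= r)%N ->
  \sum_(1 <= j < K.+1) G j r = ln (n%:R / (n%:R - (mjk t a r K.+1)%:R)).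
Proof.
move=> hr; have n0 : (0 < n)%N := leq_ltn_trans (leq0n _) (Hm 0 hr).
elim: K => [|K IH].
  rewrite big_geq // /mjk (_ : 1 - r = 0)%N /=; last by apply/eqP; rewrite subn_eq0.
  by rewrite subr0 divff ?ln1 // pnatr_eq0 -lt0n.
rewrite big_nat_recr //= IH /G.
case: (leqP r K.+1) => hrK; last first.
  rewrite /= addr0 /mjk.
  have -> : (K.+2 - r = 0)%N by apply/eqP; rewrite subn_eq0.
  by have -> : (K.+1 - r = 0)%N by apply/eqP; rewrite subn_eq0 ltnW.
rewrite /= [mjk t a r K.+2]mjk_step //.
have Ksub : (K.+2 - 2 = K)%N by rewrite subSS subSS subn0.
rewrite Ksub.
case hd: (dead t a K.+1 r) => /=.
  rewrite addr0 (_ : all _ _ = false) ?andbF ?addn0 //.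
  apply/negbTE/allPn; move: hd; rewrite /dead => /hasP [r' hr' E].
  exists r'; last by rewrite negbK.
  move: hr'; rewrite !mem_iota => /andP[h1 h2].
  apply/andP; split; first by apply: leq_ltn_trans hr h1.
  by move: h2; rewrite addSn subnKC.
case ha: (a K.+2 < t r) => /=; last by rewrite addr0 addn0.
have hall := live_all hr (negbT hd); rewrite [K.+1.-1]/= in hall.
rewrite hall addn1 /Fl ellm //; last by rewrite hd.
have hm := Hm K.+2 hr; rewrite mjk_step // Ksub hall ha addn1 in hm.
set m := mjk t a r K.+1 in hm *.
have hmR : (m.+1)%:R < n%:R :> R by rewrite ltr_nat.
rewrite -natr1 in hmR.
rewrite -natr1 -lnM ?posrE; last 2 first.
- apply: divr_gt0; first by rewrite ltr0n.
  by rewrite subr_gt0 (lt_trans _ hmR) // ltrDl.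
- apply: divr_gt0; first by lra.
  by lra.
congr ln; field.
apply/andP; split; first by apply/eqP; lra.
by apply/eqP; lra.
Qed.

Lemma comb k : (2 <= k)%N ->
  \sum_(1 <= j < k) \sum_(e <- live_times t a j | a j.+1 < e)
      ln ((n%:R - ell t a j e) / (n%:R - ell t a j e - 1))
  = \sum_(1 <= j < k) ln (n%:R / (n%:R - (mjk t a j k)%:R)).
Proof.
case: k => [|K] // hk.
transitivity (\sum_(1 <= j < K.+1) \sum_(1 <= r < K.+1) G j r).
  apply: eq_big_nat => j /andP[hj1 hjK].
  rewrite /live_times big_map big_filter_cond big_mkcond /=.
  rewrite (big_cat_nat (n := j.+1)) //=.
  rewrite [X in _ = _ + X]big1_seq ?addr0; last first.
    move=> r /andP[_]; rewrite mem_index_iota => /andP[h _].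
    by rewrite /G leqNgt h.
  rewrite /index_iota subn1 /=.
  apply: eq_big_seq => r; rewrite mem_iota => /andP[h1 h2].
  by rewrite /G /Fl -ltnS -(add1n j) h2.
rewrite exchange_big_nat; apply: eq_big_nat => r /andP[hr1 _].
exact: S_r.
Qed.

End Comb.

Unset Implicit Arguments.

Theorem lemma4 (R : realType) (n : nat) (tau : int -> R) (d b : int -> 'I_n)
    (t : nat -> R) (sig : nat -> 'I_n) (a : nat -> R) :
  (2 <= n)%N ->
  moran_realization tau d b ->
  (forall i, (1 <= i)%N -> t i < t i.+1) ->
  (forall (i : nat) (q : int), (1 <= i)%N -> tau q != t i) ->
  (forall j, (2 <= j)%N -> is_attachment tau d b t sig j (a j)) ->
  forall k, (2 <= k)%N ->
  \sum_(1 <= j < k) \sum_(e <- live_times t a j | a j.+1 < e)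
      ln ((n%:R - ell t a j e) / (n%:R - ell t a j e - 1))
  = \sum_(1 <= j < k) ln (n%:R / (n%:R - (mjk t a j k)%:R)).
Proof.
move=> hn Hreal Ht Htt Hatt k hk.
apply: (comb Ht _ _ _ hk).
- by move=> r hr; apply: (a_le Ht Hatt hr).
- by move=> i1 i2 h1 h2 E; apply: (a_inj Hreal Ht Htt Hatt h1 h2 E).
- by move=> j K hj; apply: (m_bound Ht Hatt K hj).
Qed.
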